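(* Let $G=(V,E)$ be a finite graph of maximum degree $\Delta$ with adjacency matrix $A$, and let $\boldsymbol\lambda\in(0,\infty)^V$ satisfy $\lambda_u<1/\Delta$ for all $u$. Let $B=\mathrm{diag}(1+1/\lambda_u: u\in V)$. Then every vector $\mathbf x\in\mathbb R^V$ with $\mathbf x\ge\mathbf 0$ and $(B+A)\mathbf x\ge\mathbf 1$ satisfies \[ \sum_{u\in V}x_u\ \ge\ \sum_{u\in V}\frac{\lambda_u}{1+(d_u+1)\lambda_u}. \]
   Context: $d_u$ denotes the degree of $u$; vector inequalities are entrywise; $\mathbf 1$ is the all-ones vector. *)

(* Defs.v *)
From HB Require Import structures.
From mathcomp Require Import all_boot all_order all_algebra.
Set Implicit Arguments. Unset Strict Implicit. Unset Printing Implicit Defensive.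
Import Order.TTheory GRing.Theory Num.Theory.
Local Open Scope ring_scope.

Definition simple_graph (T : finType) (e : rel T) : Prop :=
  symmetric e /\ irreflexive e.

Definition deg (T : finType) (e : rel T) (u : T) : nat := #|[set v | e u v]|.

Definition max_deg (T : finType) (e : rel T) : nat := (\max_(u : T) deg e u)%N.

Definition adj (R : numDomainType) (T : finType) (e : rel T) (u v : T) : R :=
  if e u v then 1 else 0.

Definition BA_apply (R : numFieldType) (T : finType) (e : rel T)
  (lam x : T -> R) (u : T) : R :=
  (1 + 1 / lam u) * x u + \sum_(v : T) adj R e u v * x v.

(* Main.v *)
Require Import Defs.
From HB Require Import structures.
From mathcomp Require Import all_boot all_order all_algebra.
From mathcomp Require Import lra ring.
Import Order.TTheory GRing.Theory Num.Theory.
Local Open Scope ring_scope.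

Section Aux.
Variables (R : realFieldType) (T : finType) (e : rel T) (lam : T -> R).
Hypothesis esym : symmetric e.

Lemma sum_adj u : \sum_v adj R e u v = (deg e u)%:R.
Proof.
rewrite /adj -big_mkcond /= sumr_const /deg cardsE.
by [].
Qed.

Lemma adj_sym u v : adj R e u v = adj R e v u.
Proof. by rewrite /adj esym. Qed.

Lemma adj_ge0 u v : 0 <= adj R e u v.
Proof. by rewrite /adj; case: (e u v). Qed.

Lemma sum_adj_sq (z : T -> R) :
  \sum_u \sum_v adj R e u v * (z v ^+ 2) = \sum_u (deg e u)%:R * z u ^+ 2.
Proof.
rewrite exchange_big /=; apply: eq_bigr => v _.
rewrite -mulr_suml; congr (_ * _).
rewrite -sum_adj; apply: eq_bigr => u _; exact: adj_sym.
Qed.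

Lemma sum_adj_2 (z : T -> R) : 2 * \sum_u (deg e u)%:R * z u ^+ 2 =
  \sum_u \sum_v adj R e u v * (z u ^+ 2 + z v ^+ 2).
Proof.
  rewrite mulr2n mulrDl mul1r.
  rewrite {1}[X in X + _ = _](_ : _ = \sum_u \sum_v adj R e u v * z u ^+ 2).
    rewrite -sum_adj_sq -big_split /=; apply: eq_bigr => u _.
    rewrite -big_split /=; apply: eq_bigr => v _; by rewrite mulrDr.
  apply: eq_bigr => u _; by rewrite -mulr_suml sum_adj.
Qed.

Lemma adj_quad_le (z : T -> R) :
  2 * \sum_u \sum_v adj R e u v * (z u * z v) <= 2 * \sum_u (deg e u)%:R * z u ^+ 2.
Proof.
rewrite sum_adj_2.
rewrite mulr_sumr; apply: ler_sum => u _; rewrite mulr_sumr; apply: ler_sum => v _.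
rewrite mulrCA; apply: ler_wpM2l; first exact: adj_ge0.
have := sqr_ge0 (z u - z v); rewrite sqrrB; lra.
Qed.

Lemma adj_quad_ge (z : T -> R) :
  - (2 * \sum_u (deg e u)%:R * z u ^+ 2) <= 2 * \sum_u \sum_v adj R e u v * (z u * z v).
Proof.
rewrite sum_adj_2 -sumrN.
rewrite mulr_sumr; apply: ler_sum => u _; rewrite mulr_sumr -sumrN; apply: ler_sum => v _.
rewrite mulrCA -mulrN; apply: ler_wpM2l; first exact: adj_ge0.
have := sqr_ge0 (z u + z v); rewrite sqrrD; lra.
Qed.
End Aux.

Section Main.
Variables (R : realFieldType) (T : finType) (e : rel T) (lam : T -> R).
Hypothesis esym : symmetric e.

Definition Mf (u v : T) : R := (if u == v then 1 + 1 / lam u else 0) + adj R e u v.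

Lemma BA_Mf z u : BA_apply e lam z u = \sum_v Mf u v * z v.
Proof.
rewrite /BA_apply /Mf.
under [RHS]eq_bigr => v _ do rewrite mulrDl.
rewrite big_split /=; congr (_ + _).
rewrite (bigD1 u) //= eqxx big1 ?addr0 // => v /negbTE; rewrite eq_sym => ->.
by rewrite mul0r.
Qed.

Lemma Mf_sym u v : Mf u v = Mf v u.
Proof.
rewrite /Mf (adj_sym _ _ _ esym) eq_sym; case: eqP => [->|] //.
Qed.

Definition Q (z : T -> R) := \sum_u z u * BA_apply e lam z u.

Lemma Q_expand z : Q z = \sum_u (1 + 1 / lam u) * z u ^+ 2 +
   \sum_u \sum_v adj R e u v * (z u * z v).
Proof.
rewrite /Q /BA_apply -big_split /=; apply: eq_bigr => u _.
rewrite mulrDr mulr_sumr; congr (_ + _).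
  by rewrite mulrCA expr2.
by apply: eq_bigr => v _; rewrite mulrCA.
Qed.

Lemma BA_sym a b : \sum_u a u * BA_apply e lam b u = \sum_u b u * BA_apply e lam a u.
Proof.
under eq_bigr => u _ do rewrite BA_Mf mulr_sumr.
under [RHS]eq_bigr => u _ do rewrite BA_Mf mulr_sumr.
rewrite exchange_big /=; apply: eq_bigr => u _; apply: eq_bigr => v _.
by rewrite Mf_sym; ring.
Qed.

Lemma BA_sub a b u : BA_apply e lam (fun w => a w - b w) u = BA_apply e lam a u - BA_apply e lam b u.
Proof.
rewrite !BA_Mf -sumrB; apply: eq_bigr => v _; by rewrite mulrBr.
Qed.

Lemma Q_ge z : \sum_u (1 + 1 / lam u - (deg e u)%:R) * z u ^+ 2 <= Q z.
Proof.
rewrite Q_expand.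
have := adj_quad_ge R T e esym z.
have -> : \sum_u (1 + 1 / lam u - (deg e u)%:R) * z u ^+ 2 =
  \sum_u (1 + 1 / lam u) * z u ^+ 2 - \sum_u (deg e u)%:R * z u ^+ 2.
  by rewrite -sumrB; apply: eq_bigr => u _; rewrite mulrBl.
lra.
Qed.

Lemma Q_le z : Q z <= \sum_u (1 + 1 / lam u + (deg e u)%:R) * z u ^+ 2.
Proof.
rewrite Q_expand.
have := adj_quad_le R T e esym z.
have -> : \sum_u (1 + 1 / lam u + (deg e u)%:R) * z u ^+ 2 =
  \sum_u (1 + 1 / lam u) * z u ^+ 2 + \sum_u (deg e u)%:R * z u ^+ 2.
  by rewrite -big_split; apply: eq_bigr => u _; rewrite mulrDl.
lra.
Qed.

End Main.

Theorem mainTheorem7 (R : realFieldType) (T : finType) (e : rel T)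
  (lam : T -> R) (x : T -> R) :
  simple_graph e ->
  (forall u, 0 < lam u) ->
  (forall u, lam u * (max_deg e)%:R < 1) ->
  (forall u, 0 <= x u) ->
  (forall u, 1 <= BA_apply e lam x u) ->
  \sum_(u : T) lam u / (1 + ((deg e u).+1)%:R * lam u) <= \sum_(u : T) x u.
Proof.
move=> [esym eirr] lam_pos hD x_ge0 hx.
set D : R := (max_deg e)%:R.
have hdD u : (deg e u)%:R <= D.
  rewrite /D ler_nat /max_deg. apply: leq_bigmax.
have hinv u : lam u * (1 / lam u) = 1 by rewrite mul1r mulfV // gt_eqF.
have hDl u : D < 1 / lam u.
  have := hD u; have := hinv u; have := lam_pos u; rewrite -/D; nra.
have hd u : (deg e u)%:R < 1 / lam u by apply: le_lt_trans (hdD u) (hDl u).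
have hcoef u : 0 < 1 + 1 / lam u - (deg e u)%:R by have := hd u; lra.
pose n := #|T|.
have sumT (F : T -> R) : \sum_u F u = \sum_(j < n) F (enum_val j).
  exact: (reindex _ (onW_bij _ (@enum_val_bij T))).
pose Mm : 'M[R]_n := \matrix_(i, j) Mf R T e lam (enum_val i) (enum_val j).
have Minj : row_free Mm.
  apply: inj_row_free => v hv.
  pose z := fun u => v 0 (enum_rank u).
  have hz u : BA_apply e lam z u = 0.
    rewrite (BA_Mf R T e lam) sumT.
    have := congr1 (fun A : 'rV[R]_n => A 0 (enum_rank u)) hv; rewrite !mxE => h; rewrite -[X in _ = X]h.
    apply: eq_bigr => j _; rewrite /z enum_valK mxE enum_rankK (Mf_sym R T e lam esym).
    by rewrite mulrC.
  have Q0 : Q R T e lam z = 0 by rewrite /Q big1 // => u _; rewrite hz mulr0.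
  have := Q_ge R T e lam esym z; rewrite Q0 => hle.
  have hs : \sum_u (1 + 1 / lam u - (deg e u)%:R) * z u ^+ 2 = 0.
    apply/eqP; rewrite eq_le hle /=; apply: sumr_ge0 => u _.
    by apply: mulr_ge0; [apply: ltW | apply: sqr_ge0].
  have zu u : z u = 0.
    have := psumr_eq0P (fun u _ => mulr_ge0 (ltW (hcoef u)) (sqr_ge0 (z u))) hs (i:=u) isT.
    move=> /eqP.
    by rewrite mulf_eq0 gt_eqF //= expf_eq0 /= => /eqP.
  apply/matrixP => i j; rewrite ord1 !mxE.
  by have := zu (enum_val j); rewrite /z enum_valK.
have Munit : Mm \in unitmx by rewrite -row_free_unit.
pose yv : 'cV[R]_n := invmx Mm *m const_mx 1.
pose y := fun u => yv (enum_rank u) 0.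
have hy u : BA_apply e lam y u = 1.
  rewrite (BA_Mf R T e lam) sumT.
  have : Mm *m yv = const_mx 1 by rewrite /yv mulKVmx.
  move/(congr1 (fun A : 'cV[R]_n => A (enum_rank u) 0)); rewrite !mxE => h.
  rewrite -[X in _ = X]h; apply: eq_bigr => j _.
  by rewrite /y enum_valK [Mm _ _]mxE enum_rankK.
have Slo (m : R) u : (forall v, m <= y v) ->
    (deg e u)%:R * m <= \sum_v adj R e u v * y v.
  move=> hm; rewrite -(sum_adj R T e) mulr_suml; apply: ler_sum => v _.
  by apply: ler_wpM2l; [exact: adj_ge0 | exact: hm].
have Shi (m : R) u : (forall v, y v <= m) ->
    \sum_v adj R e u v * y v <= (deg e u)%:R * m.
  move=> hm; rewrite -(sum_adj R T e) mulr_suml; apply: ler_sum => v _.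
  by apply: ler_wpM2l; [exact: adj_ge0 | exact: hm].
have hy0 u : 0 <= y u.
  case: (@arg_minP _ _ T u xpredT y isT) => u0 _ hu0.
  case: (@arg_maxP _ _ T u xpredT y isT) => w _ hw.
  rewrite leNgt; apply/negP => ylt.
  have m_lt : y u0 < 0 := le_lt_trans (hu0 u isT) ylt.
  have h1 := Slo (y u0) w (fun v => hu0 v isT).
  have h2 := Shi (y w) u0 (fun v => hw v isT).
  have e1 := hy u0; have e2 := hy w.
  rewrite /BA_apply in e1 e2.
  have a1 := hDl u0; have a2 := hDl w; have d1 := hdD u0; have d2 := hdD w.
  have d1p : 0 <= (deg e u0)%:R :> R by [].
  have d2p : 0 <= (deg e w)%:R :> R by [].
  have Dp : 0 <= D by [].
  have mY : y u0 <= y w := hu0 w isT.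
  set a := 1 / lam u0 in e1 a1; set b := 1 / lam w in e2 a2.
  set S1 := \sum_v _ in e1 h2; set S2 := \sum_v _ in e2 h1.
  set m := y u0 in m_lt e1 h1 mY; set Y := y w in e2 h2 mY.
  case: (leP 0 Y) => hY.
    have f1 : (deg e u0)%:R * Y <= D * Y by apply: ler_wpM2r.
    have f2 : D * m <= (deg e w)%:R * m by apply: ler_wnM2r; [lra|].
    have f3 : (a - D) * m < 0 by nra.
    have f4 : 0 <= (b - D) * Y by nra.
    nra.
  have f1 : (deg e u0)%:R * Y <= 0 by nra.
  have f3 : a * m < 0 by nra.
  nra.
pose t := fun u => lam u / (1 + ((deg e u).+1)%:R * lam u).
have ht u : (1 + 1 / lam u + (deg e u)%:R) * t u = 1.
  have lp := lam_pos u.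
  have hpos : 0 < 1 + ((deg e u).+1)%:R * lam u.
    have hn : 0 < ((deg e u).+1)%:R :> R by rewrite ltr0n.
    nra.
  move: hpos; rewrite /t -addn1 natrD => hpos; field.
  by rewrite !gt_eqF.
have Qt : Q R T e lam t <= \sum_u t u.
  apply: le_trans (Q_le R T e lam esym t) _; rewrite le_eqVlt; apply/orP; left; apply/eqP.
  by apply: eq_bigr => u _; rewrite expr2 mulrA ht mul1r.
have Qyt : 0 <= Q R T e lam (fun u => y u - t u).
  apply: le_trans (Q_ge R T e lam esym _); apply: sumr_ge0 => u _.
  by apply: mulr_ge0; [apply: ltW | apply: sqr_ge0].
have A1 : \sum_u y u * BA_apply e lam y u = \sum_u y u.
  by apply: eq_bigr => u _; rewrite hy mulr1.
have A2 : \sum_u t u * BA_apply e lam y u = \sum_u t u.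
  by apply: eq_bigr => u _; rewrite hy mulr1.
have A3 : \sum_u y u * BA_apply e lam t u = \sum_u t u.
  by rewrite (BA_sym R T e lam esym) A2.
have E : Q R T e lam (fun u => y u - t u) =
    \sum_u y u - \sum_u t u - \sum_u t u + Q R T e lam t.
  rewrite {1}/Q.
  under eq_bigr => u _ do rewrite (BA_sub R T e lam) mulrBl !mulrBr.
  rewrite !sumrB A1 A2 A3 /Q; lra.
have Sy : \sum_u t u <= \sum_u y u by lra.
apply: le_trans Sy _.
have -> : \sum_u x u = \sum_u x u * BA_apply e lam y u.
  by apply: eq_bigr => u _; rewrite hy mulr1.
rewrite (BA_sym R T e lam esym); apply: ler_sum => u _.
by rewrite -{1}[y u]mulr1; apply: ler_wpM2l.
Qed.
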